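(* Let $J=(a,b)\subseteq\mathbb R$ be an open interval (possibly unbounded) and let $A:J\to\mathbb R$ be differentiable with $|A'(x)-A'(y)|\le M|x-y|$ for all $x,y\in J$, for some constant $M>0$. Then $\bigl|\mathtt S[\mathrm{Im}K_\Gamma](\mathbf z)\bigr|\le\left(8+\frac32\right)M^2$ for every three-tuple $\mathbf z$ of distinct points on $\Gamma=\{x+iA(x):x\in J\}$.
   Context: $s(x)=\sqrt{1+(A'(x))^2}$. The kernel (normalizing factor $1/(2\pi)$ omitted) is $K_\Gamma(w,z)=\dfrac{A'(x)-i}{s(x)\,[\,x-y+i(A(x)-A(y))\,]}$ for $w=x+iA(x)$, $z=y+iA(y)$, $x\neq y$; $\mathrm{Im}K_\Gamma$ is its imaginary part. For a real-valued $K$ and distinct $z_1,z_2,z_3$, $\mathtt S[K](\mathbf z)=\sum_{\sigma\in S_3}K(z_{\sigma(1)},z_{\sigma(2)})K(z_{\sigma(1)},z_{\sigma(3)})$, $S_3$ the permutation group on three elements. *)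

(* Defs.v *)
From Stdlib Require Import Reals.
From Coquelicot Require Import Coquelicot.
Open Scope R_scope.

Definition in_interval (a b : Rbar) (x : R) : Prop := Rbar_lt a x /\ Rbar_lt x b.

Definition on_graph (a b : Rbar) (A : R -> R) (z : C) : Prop :=
  exists x : R, in_interval a b x /\ z = (x, A x).

Definition sfun (Ap : R -> R) (x : R) : R := sqrt (1 + (Ap x)^2).

(* K_Gamma(w,z) = (A'(x) - i) / ( s(x) [ x - y + i (A(x) - A(y)) ] ),
   w = x + iA(x), z = y + iA(y); note x - y + i(A(x)-A(y)) = w - z and x = Re w. *)
Definition KGamma (Ap : R -> R) (w z : C) : C :=
  Cdiv (Cminus (RtoC (Ap (Re w))) (0, 1)) (Cmult (RtoC (sfun Ap (Re w))) (Cminus w z)).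

Definition ImK (Ap : R -> R) (w z : C) : R := Im (KGamma Ap w z).

(* S[K](z1,z2,z3) = sum over sigma in S_3 of K(z_s1, z_s2) K(z_s1, z_s3) *)
Definition Ssym (K : C -> C -> R) (z1 z2 z3 : C) : R :=
    K z1 z2 * K z1 z3
  + K z1 z3 * K z1 z2
  + K z2 z1 * K z2 z3
  + K z2 z3 * K z2 z1
  + K z3 z1 * K z3 z2
  + K z3 z2 * K z3 z1.

(* Main.v *)
Require Import Defs.
From Stdlib Require Import Reals Lra.
From Coquelicot Require Import Coquelicot.
Open Scope R_scope.


Lemma ImK_eq (Ap : R -> R) (A : R -> R) (x y : R) : x <> y ->
  ImK Ap (x, A x) (y, A y) =
  - ((x - y) + Ap x * (A x - A y)) / (sfun Ap x * ((x - y)^2 + (A x - A y)^2)).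
Proof.
  intros Hxy.
  assert (Hs : 0 < sfun Ap x).
  { unfold sfun. apply sqrt_lt_R0. nra. }
  assert (Hd : 0 < (x - y)^2 + (A x - A y)^2).
  { assert (0 < (x-y)^2) by (simpl; rewrite Rmult_1_r; apply Rsqr_pos_lt; lra). pose proof (pow2_ge_0 (A x - A y)). lra. }
  unfold ImK, KGamma, Cdiv, Cminus, Cmult, Cinv, Copp, Cplus, RtoC, Im, Re; simpl.
  field. simpl in Hd. assert (0 < sfun Ap x * sfun Ap x * ((x-y)*(x-y)+(A x - A y)*(A x - A y))) by (apply Rmult_lt_0_compat; [nra|lra]). repeat split; try lra; nra.
Qed.

Lemma sin_abs_le x : Rabs (sin x) <= Rabs x.
Proof.
  destruct (MVT_abs sin cos 0 x) as [c [Hc _]].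
  { intros c _. apply derivable_pt_lim_sin. }
  rewrite sin_0, !Rminus_0_r in Hc. rewrite Hc.
  pose proof (COS_bound c). assert (Rabs (cos c) <= 1) by (apply Rabs_le; lra).
  pose proof (Rabs_pos x). nra.
Qed.

Lemma atan_lip x y : Rabs (atan x - atan y) <= Rabs (x - y).
Proof.
  destruct (MVT_abs atan (fun t => / (1 + t^2)) y x) as [c [Hc _]].
  { intros c _. apply derivable_pt_lim_atan. }
  rewrite Hc.
  assert (0 < 1 + c^2) by (pose proof (pow2_ge_0 c); lra).
  assert (0 < / (1 + c^2) <= 1).
  { split. apply Rinv_0_lt_compat; lra.
    rewrite <- Rinv_1. apply Rinv_le_contravar; [lra|]. pose proof (pow2_ge_0 c); lra. }
  rewrite (Rabs_right (/ (1 + c^2))) by lra.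
  pose proof (Rabs_pos (x - y)). nra.
Qed.

Lemma cos_diff x y : Rabs (cos x - cos y) <= Rabs (x - y) * Rabs (x + y) / 2.
Proof.
  rewrite form2.
  rewrite !Rabs_mult.
  pose proof (sin_abs_le ((x - y) / 2)). pose proof (sin_abs_le ((x + y) / 2)).
  unfold Rdiv in *. rewrite !Rabs_mult in *.
  rewrite (Rabs_right (/2)) in * by lra. replace (Rabs (-2)) with 2 by (rewrite Rabs_left; lra).
  pose proof (Rabs_pos (sin ((x-y)*/2))). pose proof (Rabs_pos (sin ((x+y)*/2))).
  pose proof (Rabs_pos (x-y)). pose proof (Rabs_pos (x+y)).
  nra.
Qed.

Lemma cc_eq p m : cos (atan p - atan m) = (1 + p * m) / (sqrt (1 + p^2) * sqrt (1 + m^2)).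
Proof.
  rewrite cos_minus, !cos_atan, !sin_atan.
  assert (0 < sqrt (1 + p²)) by (apply sqrt_lt_R0; pose proof (Rle_0_sqr p); lra).
  assert (0 < sqrt (1 + m²)) by (apply sqrt_lt_R0; pose proof (Rle_0_sqr m); lra).
  replace (p^2) with (p²) by (unfold Rsqr; ring).
  replace (m^2) with (m²) by (unfold Rsqr; ring).
  field; lra.
Qed.

Definition cc (p m : R) : R := cos (atan p - atan m).

Lemma abs_div_le u L v : 0 < L -> Rabs u <= v * L -> Rabs (u / L) <= v.
Proof.
  intros HL H. unfold Rdiv. rewrite Rabs_mult, (Rabs_right (/L)) by (apply Rle_ge, Rlt_le, Rinv_0_lt_compat; lra).
  apply (Rmult_le_reg_r L); [lra|]. rewrite Rmult_assoc, Rinv_l by lra. lra.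
Qed.

Lemma prod_le a a' b b' : 0 <= a <= a' -> 0 <= b <= b' -> a * b <= a' * b'.
Proof. intros. apply Rmult_le_compat; lra. Qed.

Lemma E_diff (M h1 h2 p1 p2 m12 m23 m13 : R) : 0 < h1 -> 0 < h2 -> 0 <= M ->
  Rabs (p1 - p2) <= M * h1 -> Rabs (p1 - m12) <= M * h1 -> Rabs (p2 - m12) <= M * h1 ->
  Rabs (p2 - m23) <= M * h2 -> m13 = (h1 * m12 + h2 * m23) / (h1 + h2) ->
  Rabs (cc p1 m12 * cc p1 m13 - cc p2 m12 * cc p2 m23) <= 2 * M^2 * h1 * (h1 + h2).
Proof.
  intros H1 H2 HM Hp12 Hp1 Hp2 Hp23 Hm13.
  assert (Hd : Rabs (m12 - m23) <= M * (h1 + h2)).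
  { replace (m12 - m23) with (-(p2 - m12) + (p2 - m23)) by ring.
    eapply Rle_trans; [apply Rabs_triang|]. rewrite Rabs_Ropp. lra. }
  assert (Hm13a : Rabs (m13 - m23) <= M * h1).
  { replace (m13 - m23) with (h1 * (m12 - m23) / (h1 + h2)) by (rewrite Hm13; field; lra).
    apply abs_div_le; [lra|]. rewrite Rabs_mult, (Rabs_right h1) by lra.
    pose proof (Rabs_pos (m12 - m23)). nra. }
  assert (Hm13b : Rabs (m12 - m13) <= M * h2).
  { replace (m12 - m13) with (h2 * (m12 - m23) / (h1 + h2)) by (rewrite Hm13; field; lra).
    apply abs_div_le; [lra|]. rewrite Rabs_mult, (Rabs_right h2) by lra.
    pose proof (Rabs_pos (m12 - m23)). nra. }
  unfold cc.
  set (A1 := atan p1 - atan m12). set (A2 := atan p2 - atan m12).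
  set (B1 := atan p1 - atan m13). set (B2 := atan p2 - atan m23).
  assert (HA12 : Rabs (A1 - A2) <= M * h1).
  { unfold A1, A2. replace (atan p1 - atan m12 - (atan p2 - atan m12)) with (atan p1 - atan p2) by ring.
    eapply Rle_trans; [apply atan_lip|]. lra. }
  assert (HA1 : Rabs A1 <= M * h1) by (eapply Rle_trans; [apply atan_lip|]; lra).
  assert (HA2 : Rabs A2 <= M * h1) by (eapply Rle_trans; [apply atan_lip|]; lra).
  assert (HAs : Rabs (A1 + A2) <= 2 * M * h1) by (eapply Rle_trans; [apply Rabs_triang|]; lra).
  assert (HB12 : Rabs (B1 - B2) <= 2 * M * h1).
  { unfold B1, B2. replace (atan p1 - atan m13 - (atan p2 - atan m23)) with ((atan p1 - atan p2) + (atan m23 - atan m13)) by ring.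
    eapply Rle_trans; [apply Rabs_triang|].
    pose proof (atan_lip p1 p2). pose proof (atan_lip m23 m13).
    rewrite Rabs_minus_sym in Hm13a. lra. }
  assert (HB1 : Rabs B1 <= M * (h1 + h2)).
  { eapply Rle_trans; [apply atan_lip|].
    replace (p1 - m13) with ((p1 - m12) + (m12 - m13)) by ring.
    eapply Rle_trans; [apply Rabs_triang|]. lra. }
  assert (HB2 : Rabs B2 <= M * h2) by (eapply Rle_trans; [apply atan_lip|]; lra).
  assert (HBs : Rabs (B1 + B2) <= M * (h1 + h2) + M * h2) by (eapply Rle_trans; [apply Rabs_triang|]; lra).
  replace (cos A1 * cos B1 - cos A2 * cos B2) with (cos A1 * (cos B1 - cos B2) + cos B2 * (cos A1 - cos A2)) by ring.
  eapply Rle_trans; [apply Rabs_triang|]. rewrite !Rabs_mult.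
  pose proof (cos_diff B1 B2). pose proof (cos_diff A1 A2).
  assert (Rabs (cos A1) <= 1) by (apply Rabs_le; apply COS_bound).
  assert (Rabs (cos B2) <= 1) by (apply Rabs_le; apply COS_bound).
  pose proof (Rabs_pos (cos A1)). pose proof (Rabs_pos (cos B2)).
  pose proof (Rabs_pos (cos B1 - cos B2)). pose proof (Rabs_pos (cos A1 - cos A2)).
  assert (Rabs (B1 - B2) * Rabs (B1 + B2) <= (2 * M * h1) * (M * (h1 + h2) + M * h2))
    by (apply prod_le; split; try apply Rabs_pos; lra).
  assert (Rabs (A1 - A2) * Rabs (A1 + A2) <= (M * h1) * (2 * M * h1))
    by (apply prod_le; split; try apply Rabs_pos; lra).
  assert (Rabs (cos A1) * Rabs (cos B1 - cos B2) <= Rabs (cos B1 - cos B2)) by nra.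
  assert (Rabs (cos B2) * Rabs (cos A1 - cos A2) <= Rabs (cos A1 - cos A2)) by nra.
  nra.
Qed.

Definition kk (m : R) : R := / sqrt (1 + m^2).

Lemma sqrt_facts m : sqrt (1 + m^2) * sqrt (1 + m^2) = 1 + m^2 /\ 1 <= sqrt (1 + m^2).
Proof.
  pose proof (pow2_ge_0 m). split.
  - apply sqrt_sqrt. lra.
  - apply Rle_trans with (sqrt 1); [rewrite sqrt_1; lra | apply sqrt_le_1_alt; lra].
Qed.

Lemma Delta_bound (M h1 h2 m12 m23 m13 : R) : 0 < h1 -> 0 < h2 -> 0 <= M ->
  Rabs (m12 - m23) <= M * (h1 + h2) -> m13 = (h1 * m12 + h2 * m23) / (h1 + h2) ->
  Rabs (kk m12 * kk m13 / (h1 * (h1 + h2)) - kk m12 * kk m23 / (h1 * h2)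
        + kk m13 * kk m23 / (h2 * (h1 + h2))) <= M^2 / 2.
Proof.
  intros H1 H2 HM Hd Hm13.
  destruct (sqrt_facts m12) as [E1 G1]. destruct (sqrt_facts m23) as [E2 G2].
  destruct (sqrt_facts m13) as [E3 G3].
  unfold kk.
  set (S1 := sqrt (1 + m12^2)) in *. set (S2 := sqrt (1 + m23^2)) in *.
  set (S3 := sqrt (1 + m13^2)) in *.
  set (L := h1 + h2) in *.
  assert (HL : 0 < L) by (unfold L; lra).
  set (a := h1 * S1). set (b := L * S3). set (c := h2 * S2).
  set (X := S1 * S2 - 1 - m12 * m23).
  assert (HS3 : L * L * (S3 * S3) = L * L + (h1 * m12 + h2 * m23) * (h1 * m12 + h2 * m23)).
  { rewrite E3, Hm13. field. lra. }
  assert (Hkey : (a + c - b) * (a + c + b) = 2 * h1 * h2 * X).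
  { unfold a, b, c, X.
    replace ((h1 * S1 + h2 * S2 - L * S3) * (h1 * S1 + h2 * S2 + L * S3))
      with (h1 * h1 * (S1 * S1) + h2 * h2 * (S2 * S2) + 2 * h1 * h2 * (S1 * S2) - L * L * (S3 * S3)) by ring.
    rewrite HS3, E1, E2. unfold L. ring. }
  assert (HP2 : (S1 * S2) * (S1 * S2) = (1 + m12 * m23) * (1 + m12 * m23) + (m12 - m23) * (m12 - m23)).
  { replace ((S1 * S2) * (S1 * S2)) with ((S1 * S1) * (S2 * S2)) by ring. rewrite E1, E2. ring. }
  assert (HP0 : 1 <= S1 * S2) by nra.
  assert (HX0 : 0 <= X).
  { unfold X. destruct (Rle_dec (1 + m12 * m23) 0). nra.
    assert ((S1 * S2 - (1 + m12 * m23)) * (S1 * S2 + (1 + m12 * m23)) >= 0) by (replace ((S1 * S2 - (1 + m12 * m23)) * (S1 * S2 + (1 + m12 * m23))) with ((S1 * S2) * (S1 * S2) - (1 + m12 * m23) * (1 + m12 * m23)) by ring; rewrite HP2; pose proof (Rle_0_sqr (m12 - m23)); unfold Rsqr in *; lra). nra. }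
  assert (HPq : 2 <= S1 * S2 + (1 + m12 * m23)).
  { assert (HP3 : (S1 * S2) * (S1 * S2) = (1 - m12 * m23) * (1 - m12 * m23) + (m12 + m23) * (m12 + m23)) by (rewrite HP2; ring).
    destruct (Rle_dec (1 - m12 * m23) 0). nra.
    assert ((S1 * S2 - (1 - m12 * m23)) * (S1 * S2 + (1 - m12 * m23)) >= 0) by (replace ((S1 * S2 - (1 - m12 * m23)) * (S1 * S2 + (1 - m12 * m23))) with ((S1 * S2) * (S1 * S2) - (1 - m12 * m23) * (1 - m12 * m23)) by ring; rewrite HP3; pose proof (Rle_0_sqr (m12 + m23)); unfold Rsqr in *; lra). nra. }
  assert (HX1 : 2 * X <= (m12 - m23) * (m12 - m23)).
  { unfold X. assert (0 <= (S1 * S2 - (1 + m12 * m23)) * (S1 * S2 + (1 + m12 * m23) - 2)) by (apply Rmult_le_pos; unfold X in HX0; lra). nra. }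
  assert (Hdd : (m12 - m23) * (m12 - m23) <= (M * L) * (M * L)).
  { assert (0 <= M * L) by nra. unfold Rabs in Hd; destruct (Rcase_abs (m12 - m23)); nra. }
  assert (Ha : h1 <= a) by (unfold a; nra).
  assert (Hb : L <= b) by (unfold b; nra).
  assert (Hc : h2 <= c) by (unfold c; nra).
  set (D := (a + b + c) * b * (S1 * S2)).
  assert (HD : 2 * L * L <= D).
  { unfold D. assert (2 * L <= a + b + c) by (unfold L in *; lra).
    assert (2 * L * L <= (a + b + c) * b) by (apply prod_le; lra).
    assert (0 <= (a+b+c) * b) by nra. nra. }
  assert (HE : / S1 * / S3 / (h1 * L) - / S1 * / S2 / (h1 * h2) + / S3 * / S2 / (h2 * L) = 2 * X / D).
  { assert (Habc : a + c - b = 2 * h1 * h2 * X / (a + b + c)).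
    { rewrite <- Hkey. field. lra. }
    transitivity ((a + c - b) / (a * b * c)).
    - unfold a, b, c. field. repeat split; lra.
    - rewrite Habc. unfold D, a, b, c. field. repeat split; nra. }
  rewrite HE. rewrite Rabs_right.
  2: { apply Rle_ge. unfold Rdiv. apply Rmult_le_pos; [lra|]. apply Rlt_le, Rinv_0_lt_compat. nra. }
  apply (Rmult_le_reg_r D); [nra|]. unfold Rdiv. rewrite Rmult_assoc, Rinv_l by nra.
  assert (0 <= M * M) by nra.
  assert (M * M * (2 * L * L) <= M * M * D) by (apply Rmult_le_compat_l; lra).
  nra.
Qed.

Definition Q (p m : R) : R := cc p m * kk m.

Lemma kk_bound m : 0 < kk m <= 1.
Proof.
  destruct (sqrt_facts m) as [_ G]. unfold kk. split.
  - apply Rinv_0_lt_compat; lra.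
  - apply Rle_trans with (/ 1); [apply Rinv_le_contravar; lra | rewrite Rinv_1; lra].
Qed.

Lemma cc_bound p m : Rabs (cc p m) <= 1.
Proof. unfold cc. apply Rabs_le, COS_bound. Qed.

Lemma term_bound K k1 k2 h L B : 0 < h -> 0 < L -> 0 <= B -> Rabs K <= B * h * L ->
  0 < k1 <= 1 -> 0 < k2 <= 1 -> Rabs (K * (k1 * k2 / (h * L))) <= B.
Proof.
  intros Hh HL HB HK Hk1 Hk2.
  rewrite Rabs_mult. rewrite (Rabs_right (k1 * k2 / (h * L))).
  2: { apply Rle_ge. unfold Rdiv. apply Rmult_le_pos; [nra|]. apply Rlt_le, Rinv_0_lt_compat; nra. }
  assert (k1 * k2 / (h * L) <= / (h * L)).
  { unfold Rdiv. rewrite <- (Rmult_1_l (/ (h * L))) at 2. apply Rmult_le_compat_r. apply Rlt_le, Rinv_0_lt_compat; nra. nra. }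
  assert (0 <= k1 * k2 / (h * L)).
  { unfold Rdiv. apply Rmult_le_pos; [nra|]. apply Rlt_le, Rinv_0_lt_compat; nra. }
  assert (Rabs K * / (h * L) <= B).
  { apply (Rmult_le_reg_r (h * L)); [nra|]. rewrite Rmult_assoc, Rinv_l by nra. lra. }
  pose proof (Rabs_pos K). nra.
Qed.

Lemma core (M h1 h2 p1 p2 p3 m12 m23 m13 : R) : 0 < h1 -> 0 < h2 -> 0 <= M ->
  Rabs (p1 - p2) <= M * h1 -> Rabs (p3 - p2) <= M * h2 ->
  Rabs (p1 - m12) <= M * h1 -> Rabs (p2 - m12) <= M * h1 ->
  Rabs (p2 - m23) <= M * h2 -> Rabs (p3 - m23) <= M * h2 ->
  m13 = (h1 * m12 + h2 * m23) / (h1 + h2) ->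
  Rabs (2 * (Q p1 m12 * Q p1 m13 / (h1 * (h1 + h2)) - Q p2 m12 * Q p2 m23 / (h1 * h2)
             + Q p3 m13 * Q p3 m23 / (h2 * (h1 + h2)))) <= 9 * M^2.
Proof.
  intros H1 H2 HM Hp12 Hp32 Hp1 Hp2 Hp2' Hp3 Hm13.
  pose proof (E_diff M h1 h2 p1 p2 m12 m23 m13 H1 H2 HM Hp12 Hp1 Hp2 Hp2' Hm13) as EA.
  assert (Hm13' : m13 = (h2 * m23 + h1 * m12) / (h2 + h1)) by (rewrite Hm13; field; lra).
  pose proof (E_diff M h2 h1 p3 p2 m23 m12 m13 H2 H1 HM Hp32 Hp3 Hp2' Hp2 Hm13') as EB.
  assert (Hd : Rabs (m12 - m23) <= M * (h1 + h2)).
  { replace (m12 - m23) with (-(p2 - m12) + (p2 - m23)) by ring.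
    eapply Rle_trans; [apply Rabs_triang|]. rewrite Rabs_Ropp. lra. }
  pose proof (Delta_bound M h1 h2 m12 m23 m13 H1 H2 HM Hd Hm13) as DB.
  set (K1 := cc p1 m12 * cc p1 m13) in *.
  set (K2 := cc p2 m12 * cc p2 m23) in *.
  set (K3 := cc p3 m23 * cc p3 m13) in *.
  set (Dl := kk m12 * kk m13 / (h1 * (h1 + h2)) - kk m12 * kk m23 / (h1 * h2)
        + kk m13 * kk m23 / (h2 * (h1 + h2))) in *.
  assert (Hid : Q p1 m12 * Q p1 m13 / (h1 * (h1 + h2)) - Q p2 m12 * Q p2 m23 / (h1 * h2)
             + Q p3 m13 * Q p3 m23 / (h2 * (h1 + h2))
     = K2 * Dl + (K1 - K2) * (kk m12 * kk m13 / (h1 * (h1 + h2)))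
       + (K3 - K2) * (kk m13 * kk m23 / (h2 * (h1 + h2)))).
  { unfold Q, K1, K2, K3, Dl. field. repeat split; lra. }
  rewrite Hid.
  assert (HK2 : Rabs K2 <= 1).
  { unfold K2. rewrite Rabs_mult. pose proof (cc_bound p2 m12). pose proof (cc_bound p2 m23).
    pose proof (Rabs_pos (cc p2 m12)). pose proof (Rabs_pos (cc p2 m23)). nra. }
  assert (T1 : Rabs (K2 * Dl) <= M^2 / 2).
  { rewrite Rabs_mult. pose proof (Rabs_pos K2). pose proof (Rabs_pos Dl). nra. }
  assert (T2 : Rabs ((K1 - K2) * (kk m12 * kk m13 / (h1 * (h1 + h2)))) <= 2 * M^2).
  { apply term_bound; try lra; try apply kk_bound. nra. }
  assert (T3 : Rabs ((K3 - K2) * (kk m13 * kk m23 / (h2 * (h1 + h2)))) <= 2 * M^2).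
  { apply term_bound; try lra; try apply kk_bound. nra. replace (h1 + h2) with (h2 + h1) by ring. replace (K3 - K2) with (cc p3 m23 * cc p3 m13 - cc p2 m23 * cc p2 m12) by (unfold K2, K3; ring). exact EB. }
  rewrite Rabs_mult, (Rabs_right 2) by lra.
  pose proof (Rabs_triang (K2 * Dl + (K1 - K2) * (kk m12 * kk m13 / (h1 * (h1 + h2))))
                ((K3 - K2) * (kk m13 * kk m23 / (h2 * (h1 + h2))))).
  pose proof (Rabs_triang (K2 * Dl) ((K1 - K2) * (kk m12 * kk m13 / (h1 * (h1 + h2))))).
  lra.
Qed.

Lemma aux_field (p m Sp Sm x y : R) : Sp <> 0 -> Sm <> 0 -> x - y <> 0 ->
  - (1 + p * m) / (Sp * (Sm * Sm)) / (x - y) = - ((1 + p * m) / (Sp * Sm) * / Sm) / (x - y).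
Proof. intros. field. auto. Qed.

Lemma ImK_Q (Ap A : R -> R) (x y : R) : x <> y ->
  ImK Ap (x, A x) (y, A y) = - Q (Ap x) ((A x - A y) / (x - y)) / (x - y).
Proof.
  intros Hxy. rewrite ImK_eq by exact Hxy.
  set (m := (A x - A y) / (x - y)).
  assert (Hm : A x - A y = m * (x - y)) by (unfold m; field; lra).
  rewrite Hm. unfold Q, cc, kk. rewrite cc_eq. unfold sfun.
  destruct (sqrt_facts m) as [Em Gm]. destruct (sqrt_facts (Ap x)) as [Ep Gp].
  set (Sm := sqrt (1 + m^2)) in *. set (Sp := sqrt (1 + Ap x ^ 2)) in *.
  assert (Hxy' : x - y <> 0) by lra.
  clearbody Sm Sp m. transitivity (- (1 + Ap x * m) / (Sp * (Sm * Sm)) / (x - y)).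
  - rewrite Em.
    assert (0 < (x - y) * (x - y)) by (apply Rsqr_pos_lt; lra).
    pose proof (pow2_ge_0 m).
    assert (0 < (x - y) ^ 2 + (m * (x - y)) ^ 2) by (simpl; nra).
    field. repeat split; try lra.
  - apply aux_field; lra.
Qed.

Lemma interval_between a b x y c : in_interval a b x -> in_interval a b y -> x <= c <= y ->
  in_interval a b c.
Proof.
  intros [Hx1 Hx2] [Hy1 Hy2] [H1 H2]. split.
  - eapply Rbar_lt_le_trans; [exact Hx1|]. simpl. exact H1.
  - eapply Rbar_le_lt_trans; [|exact Hy2]. simpl. exact H2.
Qed.

Lemma slope_close (a b : Rbar) (A Ap : R -> R) (M : R) :
  0 < M ->
  (forall x : R, in_interval a b x -> is_derive A x (Ap x)) ->
  (forall x y : R, in_interval a b x -> in_interval a b y ->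
     Rabs (Ap x - Ap y) <= M * Rabs (x - y)) ->
  forall x y, x < y -> in_interval a b x -> in_interval a b y ->
  Rabs (Ap x - (A y - A x) / (y - x)) <= M * (y - x) /\
  Rabs (Ap y - (A y - A x) / (y - x)) <= M * (y - x).
Proof.
  intros HM Hder Hlip x y Hxy Hx Hy.
  assert (HD : forall c, x <= c <= y -> derivable_pt_lim A c (Ap c)).
  { intros c Hc. apply is_derive_Reals. apply Hder. exact (interval_between a b x y c Hx Hy Hc). }
  destruct (MVT_cor2 A Ap x y Hxy HD) as [c [Hc Hcb]].
  assert (Hs : (A y - A x) / (y - x) = Ap c) by (rewrite Hc; field; lra).
  rewrite Hs.
  assert (Hcin : in_interval a b c) by (apply (interval_between a b x y c Hx Hy); lra).
  split.
  - eapply Rle_trans; [apply Hlip; eauto|].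
    rewrite Rabs_left by lra. nra.
  - eapply Rle_trans; [apply Hlip; eauto|].
    rewrite Rabs_right by lra. nra.
Qed.

Lemma ordered (a b : Rbar) (A Ap : R -> R) (M : R) :
  0 < M ->
  (forall x : R, in_interval a b x -> is_derive A x (Ap x)) ->
  (forall x y : R, in_interval a b x -> in_interval a b y ->
     Rabs (Ap x - Ap y) <= M * Rabs (x - y)) ->
  forall x1 x2 x3, x1 < x2 -> x2 < x3 ->
  in_interval a b x1 -> in_interval a b x2 -> in_interval a b x3 ->
  Rabs (Ssym (ImK Ap) (x1, A x1) (x2, A x2) (x3, A x3)) <= (8 + 3 / 2) * M ^ 2.
Proof.
  intros HM Hder Hlip x1 x2 x3 H12 H23 I1 I2 I3.
  destruct (slope_close a b A Ap M HM Hder Hlip x1 x2 H12 I1 I2) as [S1 S2].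
  destruct (slope_close a b A Ap M HM Hder Hlip x2 x3 H23 I2 I3) as [S3 S4].
  pose proof (Hlip x1 x2 I1 I2) as L12. pose proof (Hlip x3 x2 I3 I2) as L32.
  rewrite (Rabs_left (x1 - x2)) in L12 by lra. rewrite (Rabs_right (x3 - x2)) in L32 by lra.
  set (m12 := (A x2 - A x1) / (x2 - x1)) in *.
  set (m23 := (A x3 - A x2) / (x3 - x2)) in *.
  set (m13 := (A x3 - A x1) / (x3 - x1)).
  assert (Hm13 : m13 = ((x2 - x1) * m12 + (x3 - x2) * m23) / ((x2 - x1) + (x3 - x2))).
  { unfold m13, m12, m23. field. repeat split; lra. }
  assert (C := core M (x2 - x1) (x3 - x2) (Ap x1) (Ap x2) (Ap x3) m12 m23 m13).
  assert (Heq : Ssym (ImK Ap) (x1, A x1) (x2, A x2) (x3, A x3) =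
     2 * (Q (Ap x1) m12 * Q (Ap x1) m13 / ((x2 - x1) * ((x2 - x1) + (x3 - x2)))
          - Q (Ap x2) m12 * Q (Ap x2) m23 / ((x2 - x1) * (x3 - x2))
          + Q (Ap x3) m13 * Q (Ap x3) m23 / ((x3 - x2) * ((x2 - x1) + (x3 - x2))))).
  { unfold Ssym. rewrite !ImK_Q by lra.
    replace ((A x1 - A x2) / (x1 - x2)) with m12 by (unfold m12; field; lra).
    replace ((A x2 - A x1) / (x2 - x1)) with m12 by reflexivity.
    replace ((A x1 - A x3) / (x1 - x3)) with m13 by (unfold m13; field; lra).
    replace ((A x3 - A x1) / (x3 - x1)) with m13 by reflexivity.
    replace ((A x2 - A x3) / (x2 - x3)) with m23 by (unfold m23; field; lra).
    replace ((A x3 - A x2) / (x3 - x2)) with m23 by reflexivity.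
    field. repeat split; lra. }
  rewrite Heq.
  eapply Rle_trans.
  - apply C; try lra; try (rewrite Rabs_minus_sym; lra); try exact Hm13.
  - assert (0 <= M ^ 2) by (apply pow2_ge_0). lra.
Qed.

Lemma Ssym_12 K z1 z2 z3 : Ssym K z1 z2 z3 = Ssym K z2 z1 z3.
Proof. unfold Ssym. ring. Qed.
Lemma Ssym_23 K z1 z2 z3 : Ssym K z1 z2 z3 = Ssym K z1 z3 z2.
Proof. unfold Ssym. ring. Qed.

Theorem corollary1p6 (a b : Rbar) (A Ap : R -> R) (M : R) :
  Rbar_lt a b ->
  0 < M ->
  (forall x : R, in_interval a b x -> is_derive A x (Ap x)) ->
  (forall x y : R, in_interval a b x -> in_interval a b y ->
     Rabs (Ap x - Ap y) <= M * Rabs (x - y)) ->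
  forall z1 z2 z3 : C,
    on_graph a b A z1 -> on_graph a b A z2 -> on_graph a b A z3 ->
    z1 <> z2 -> z1 <> z3 -> z2 <> z3 ->
    Rabs (Ssym (ImK Ap) z1 z2 z3) <= (8 + 3 / 2) * M ^ 2.
Proof.
  intros Hab HM Hder Hlip z1 z2 z3 [x1 [I1 E1]] [x2 [I2 E2]] [x3 [I3 E3]] N12 N13 N23.
  subst z1 z2 z3.
  assert (D12 : x1 <> x2) by (intro; subst; apply N12; reflexivity).
  assert (D13 : x1 <> x3) by (intro; subst; apply N13; reflexivity).
  assert (D23 : x2 <> x3) by (intro; subst; apply N23; reflexivity).
  pose proof (ordered a b A Ap M HM Hder Hlip) as O.
  destruct (Rlt_or_le x1 x2); destruct (Rlt_or_le x2 x3); destruct (Rlt_or_le x1 x3).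
  - apply O; auto.
  - apply O; auto.
  - rewrite Ssym_23. apply O; auto; lra.
  - rewrite Ssym_23, Ssym_12. apply O; auto; lra.
  - rewrite Ssym_12. apply O; auto; lra.
  - rewrite Ssym_12, Ssym_23. apply O; auto; lra.
  - lra.
  - rewrite Ssym_12, Ssym_23, Ssym_12. apply O; auto; lra.
Qed.
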